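(* Let $n\ge1$ be an integer and let $(V,\|\cdot\|_{4n})$ be a normed plane whose unit circle is an affine regular $4n$-gon. Then $$c_B(\|\cdot\|_{4n})=\Big(\cos\frac{\pi}{4n}\Big)^2.$$
   Context: A normed (Minkowski) plane $(V,\|\cdot\|)$ is a two-dimensional real vector space with a norm; $o$ is the origin, $B=\{v:\|v\|\le1\}$ the unit ball, $S=\{v:\|v\|=1\}$ the unit circle. An affine regular $m$-gon centered at $o$ is the image of a Euclidean regular $m$-gon centered at the origin under a linear bijection. For distinct $x,y$, $\mathrm{bis}(x,y)=\{z\in V:\|z-x\|=\|z-y\|\}$. For $x\in S$, the inner projection is $\mathrm{P_I}(x)=\{z/\|z\|: z\in(\mathrm{bis}(-x,x)\cap B)\setminus\{o\}\}$. The sine function is $s:S\times S\to\mathbb{R}$, $s(u,v)=\inf_{t\in\mathbb{R}}\|u+tv\|$. The constant $c_B$ is $c_B(\|\cdot\|)=\inf_{x\in S}\ \inf_{w\in\mathrm{P_I}(x)} s(w,x)$. *)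

(* Defs.v *)
(* classical reals. The plane V is modelled as R*R (WLOG). *)
From Stdlib Require Import Reals Lra ClassicalEpsilon ClassicalDescription.
Open Scope R_scope.

Definition vec := (R * R)%type.
Definition vadd (u v : vec) : vec := (fst u + fst v, snd u + snd v).
Definition vscal (a : R) (u : vec) : vec := (a * fst u, a * snd u).
Definition vopp (u : vec) : vec := vscal (-1) u.
Definition vsub (u v : vec) : vec := vadd u (vopp v).
Definition vzero : vec := (0, 0).

Definition is_norm (N : vec -> R) : Prop :=
  (forall x, N x = 0 -> x = vzero) /\
  (forall a x, N (vscal a x) = Rabs a * N x) /\
  (forall x y, N (vadd x y) <= N x + N y).

(* Greatest lower bound and infimum (classical choice; 0 if no glb exists). *)
Definition is_lower_bound (E : R -> Prop) (m : R) : Prop := forall x, E x -> m <= x.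
Definition is_glb (E : R -> Prop) (m : R) : Prop :=
  is_lower_bound E m /\ (forall b, is_lower_bound E b -> b <= m).

Definition Rinf (E : R -> Prop) : R :=
  match excluded_middle_informative (exists m, is_glb E m) with
  | left h => proj1_sig (constructive_indefinite_description _ h)
  | right _ => 0
  end.

Definition reg_vertex (m k : nat) : vec :=
  (cos (2 * PI * INR k / INR m), sin (2 * PI * INR k / INR m)).

Definition on_reg_polygon (m : nat) (p : vec) : Prop :=
  exists (k : nat) (t : R), (k < m)%nat /\ 0 <= t <= 1 /\
    p = vadd (vscal (1 - t) (reg_vertex m k)) (vscal t (reg_vertex m (S k))).

Definition linmap (a b c d : R) (p : vec) : vec :=
  (a * fst p + b * snd p, c * fst p + d * snd p).

(* The unit circle of N is an affine regular m-gon centered at o: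
   the image of a Euclidean regular m-gon under a linear bijection. *)
Definition unit_circle_affine_regular (N : vec -> R) (m : nat) : Prop :=
  exists a b c d : R, a * d - b * c <> 0 /\
    forall v, N v = 1 <-> exists p, on_reg_polygon m p /\ v = linmap a b c d p.

Definition bis (N : vec -> R) (x y z : vec) : Prop := N (vsub z x) = N (vsub z y).

Definition P_I (N : vec -> R) (x w : vec) : Prop :=
  exists z, bis N (vopp x) x z /\ N z <= 1 /\ z <> vzero /\ w = vscal (/ N z) z.

Definition sine (N : vec -> R) (u v : vec) : R :=
  Rinf (fun r => exists t : R, r = N (vadd u (vscal t v))).

Definition c_B (N : vec -> R) : R :=
  Rinf (fun c => exists x, N x = 1 /\
          c = Rinf (fun r => exists w, P_I N x w /\ r = sine N w x)).

(* Main.v *)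
Require Import Defs.
From Stdlib Require Import Reals Lra Lia ZArith Psatz ClassicalEpsilon ClassicalDescription.
Open Scope R_scope.

Definition e2 (p : vec) := fst p * fst p + snd p * snd p.
Definition dt (p q : vec) := fst p * snd q - snd p * fst q.
Definition ip (p q : vec) := fst p * fst q + snd p * snd q.

Lemma norm_nonneg N : is_norm N -> forall x, 0 <= N x.
Proof.
  intros [H0 [Hs Ht]] x.
  assert (E : vadd x (vscal (-1) x) = vscal 0 x).
  { destruct x; unfold vadd, vscal; simpl; f_equal; ring. }
  pose proof (Ht x (vscal (-1) x)) as T. rewrite E, !Hs in T.
  assert (A1 : Rabs (-1) = 1) by (unfold Rabs; destruct Rcase_abs; lra).
  assert (A0 : Rabs 0 = 0) by (unfold Rabs; destruct Rcase_abs; lra).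
  rewrite A0, A1 in T. lra.
Qed.

Lemma glb_exists E : (exists x, E x) -> (exists b, is_lower_bound E b) -> exists m, is_glb E m.
Proof.
  intros [x Hx] [b Hb].
  destruct (completeness (fun y => E (-y))) as [M [HM1 HM2]].
  - exists (-b). intros y Hy. specialize (Hb _ Hy). lra.
  - exists (-x). rewrite Ropp_involutive. exact Hx.
  - exists (-M). split.
    + intros y Hy. assert (H1 : E (- - y)) by (rewrite Ropp_involutive; exact Hy).
      specialize (HM1 _ H1). lra.
    + intros c Hc. assert (M <= -c); [|lra].
      apply HM2. intros y Hy. specialize (Hc _ Hy). lra.
Qed.

Lemma Rinf_glb E : (exists x, E x) -> (exists b, is_lower_bound E b) -> is_glb E (Rinf E).
Proof.
  intros H1 H2. pose proof (glb_exists E H1 H2) as H.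
  unfold Rinf. destruct (excluded_middle_informative _) as [h|h]; [|contradiction].
  destruct (constructive_indefinite_description _ h) as [m Hm]. exact Hm.
Qed.

Lemma Rinf_le E x : (exists b, is_lower_bound E b) -> E x -> Rinf E <= x.
Proof.
  intros H Hx. destruct (Rinf_glb E (ex_intro _ x Hx) H) as [A _]. apply A, Hx.
Qed.

Lemma Rinf_ge E b : (exists x, E x) -> (forall x, E x -> b <= x) -> b <= Rinf E.
Proof.
  intros H1 H2. destruct (Rinf_glb E H1 (ex_intro _ b H2)) as [_ B]. apply B. exact H2.
Qed.

Lemma abs_cos_shift_nat x k : Rabs (cos (x + INR k * PI)) = Rabs (cos x).
Proof.
  induction k as [|k IH].
  - simpl. rewrite Rmult_0_l, Rplus_0_r. reflexivity.
  - rewrite S_INR. replace (x + (INR k + 1) * PI) with ((x + INR k * PI) + PI) by ring.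
    rewrite neg_cos, Rabs_Ropp. exact IH.
Qed.

Lemma abs_cos_shift x q : Rabs (cos (x + IZR q * PI)) = Rabs (cos x).
Proof.
  destruct (Z_le_gt_dec 0 q) as [H|H].
  - rewrite <- (Z2Nat.id q H), <- INR_IZR_INZ. apply abs_cos_shift_nat.
  - assert (Hq : q = (- Z.of_nat (Z.to_nat (- q)))%Z) by lia.
    rewrite Hq, opp_IZR, <- INR_IZR_INZ.
    set (k := Z.to_nat (-q)).
    rewrite <- (abs_cos_shift_nat (x + - INR k * PI) k).
    f_equal. f_equal. ring.
Qed.

Definition th (n : nat) := PI / INR (4 * n).

Lemma th_facts n : (1 <= n)%nat ->
  0 < th n /\ th n <= PI / 4 /\ INR (4 * n) * th n = PI /\ 4 * INR n * th n = PI.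
Proof.
  intros Hn. assert (H1 : 1 <= INR n) by (apply (le_INR 1); exact Hn).
  assert (E : INR (4 * n) = 4 * INR n) by (rewrite mult_INR; simpl; ring).
  pose proof PI_RGT_0. unfold th. rewrite E.
  split; [|split; [|split]].
  - apply Rdiv_lt_0_compat; lra.
  - unfold Rdiv. apply Rmult_le_compat_l; [lra|]. apply Rinv_le_contravar; lra.
  - field; lra.
  - field; lra.
Qed.

Lemma trig_odd n l : (1 <= n)%nat ->
  Rabs (cos ((2 * IZR l - 1) * th n)) <= cos (th n).
Proof.
  intros Hn. destruct (th_facts n Hn) as [T0 [T1 [T2 T3]]].
  set (nz := Z.of_nat n).
  assert (Hnz : (1 <= nz)%Z) by (unfold nz; lia).
  set (q := ((2 * l - 1 + 2 * nz) / (4 * nz))%Z).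
  set (r := (2 * l - 1 - q * (4 * nz))%Z).
  assert (Hdm := Z.div_mod (2 * l - 1 + 2 * nz) (4 * nz) ltac:(lia)).
  assert (Hmb := Z.mod_pos_bound (2 * l - 1 + 2 * nz) (4 * nz) ltac:(lia)).
  fold q in Hdm.
  assert (Hr1 : (- 2 * nz <= r < 2 * nz)%Z) by (unfold r; lia).
  assert (Hr2 : r <> 0%Z).
  { unfold r. intro C. assert (2 * (l - 2 * (q * nz)) = 1)%Z by lia. lia. }
  assert (E : (2 * IZR l - 1) * th n = IZR r * th n + IZR q * PI).
  { rewrite <- T3. unfold r. rewrite minus_IZR, !mult_IZR, minus_IZR, mult_IZR.
    unfold nz. rewrite <- INR_IZR_INZ. simpl. ring. }
  rewrite E, abs_cos_shift.
  assert (Ha : 1 <= Rabs (IZR r) <= 2 * INR n).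
  { rewrite <- abs_IZR. split.
    - apply IZR_le. lia.
    - rewrite INR_IZR_INZ. fold nz. replace 2 with (IZR 2) by reflexivity.
      rewrite <- mult_IZR. apply IZR_le. lia. }
  assert (Ec : cos (IZR r * th n) = cos (Rabs (IZR r) * th n)).
  { destruct (Rle_dec 0 (IZR r)).
    - rewrite Rabs_right; lra.
    - rewrite Rabs_left by lra. rewrite <- cos_neg. f_equal. ring. }
  rewrite Ec.
  assert (B1 : th n <= Rabs (IZR r) * th n) by nra.
  assert (B2 : Rabs (IZR r) * th n <= PI / 2) by nra.
  assert (C0 : 0 <= cos (Rabs (IZR r) * th n)) by (apply cos_ge_0; nra).
  rewrite Rabs_right by lra.
  apply cos_decr_1; pose proof PI_RGT_0; lra.
Qed.
Lemma core0 c s a1 a2 b : 0 < c -> 0 < s -> c*c + s*s = 1 ->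
  a1*a1 <= c*c -> a1*a1 + a2*a2 <= 1 -> b*b <= s*s -> 0 <= a2 ->
  c * (a1*a1 + a2*a2 - (c*c + b*b)) <= 2 * s * Rabs (b * a1 - c * a2).
Proof.
  intros Hc Hs Hcs H1 H2 H3 Ha2.
  assert (Hb : Rabs b <= s) by (rewrite <- (Rabs_right s) by lra; apply Rsqr_le_abs_0; unfold Rsqr; lra).
  assert (Ha1 : Rabs a1 <= c) by (rewrite <- (Rabs_right c) by lra; apply Rsqr_le_abs_0; unfold Rsqr; lra).
  assert (Hbb : b * b = Rabs b * Rabs b) by (rewrite <- Rabs_mult; rewrite Rabs_right; nra).
  destruct (Rle_dec a2 (Rabs b)) as [L|L].
  - assert (0 <= Rabs (b*a1 - c*a2)) by apply Rabs_pos.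
    assert (a2*a2 <= Rabs b * Rabs b) by nra. nra.
  - assert (D : c * (a2 - Rabs b) <= c * a2 - b * a1).
    { assert (Rabs (b*a1) <= Rabs b * c) by (rewrite Rabs_mult; apply Rmult_le_compat_l; [apply Rabs_pos|lra]).
      pose proof (Rle_abs (b*a1)). nra. }
    assert (D2 : c * a2 - b * a1 <= Rabs (b * a1 - c * a2)).
    { rewrite <- Rabs_Ropp. replace (- (b*a1 - c*a2)) with (c*a2 - b*a1) by ring. apply Rle_abs. }
    destruct (Rle_dec a2 s).
    + assert (a2*a2 - b*b <= 2*s*(a2 - Rabs b)) by nra. nra.
    + assert (a1*a1+a2*a2 - (c*c+b*b) <= s*s - b*b) by nra.
      assert (s*s - b*b <= 2*s*(a2 - Rabs b)) by nra. nra.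
Qed.

Lemma core c s a1 a2 b : 0 < c -> 0 < s -> c*c + s*s = 1 ->
  a1*a1 <= c*c -> a1*a1 + a2*a2 <= 1 -> b*b <= s*s ->
  c * (a1*a1 + a2*a2 - (c*c + b*b)) <= 2 * s * Rabs (b * a1 - c * a2).
Proof.
  intros. destruct (Rle_dec 0 a2).
  - apply core0; auto.
  - pose proof (core0 c s (-a1) (-a2) b) as K.
    replace (b * -a1 - c * -a2) with (-(b*a1 - c*a2)) in K by ring.
    rewrite Rabs_Ropp in K. replace (-a1 * -a1 + -a2 * -a2) with (a1*a1+a2*a2) in K by ring.
    apply K; auto; nra.
Qed.

Lemma RV n k : (1 <= n)%nat ->
  reg_vertex (4 * n) k = (cos (2 * INR k * th n), sin (2 * INR k * th n)).
Proof.
  intros Hn. assert (0 < INR (4 * n)) by (apply lt_0_INR; lia).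
  unfold reg_vertex, th. f_equal; f_equal; field; lra.
Qed.

Lemma poly_e2 n p : (1 <= n)%nat -> on_reg_polygon (4 * n) p ->
  cos (th n) * cos (th n) <= e2 p <= 1.
Proof.
  intros Hn [k [t [Hk [Ht Hp]]]]. subst p. rewrite !RV by exact Hn.
  rewrite S_INR. set (A := 2 * INR k * th n).
  replace (2 * (INR k + 1) * th n) with (A + 2 * th n) by (unfold A; ring).
  unfold e2, vadd, vscal; simpl.
  pose proof (sin2_cos2 A) as S1. pose proof (sin2_cos2 (A + 2 * th n)) as S2.
  pose proof (cos_minus A (A + 2 * th n)) as CM.
  replace (A - (A + 2 * th n)) with (- (2 * th n)) in CM by ring.
  rewrite cos_neg, cos_2a_cos in CM. unfold Rsqr in *.
  pose proof (COS_bound (th n)).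
  assert (E : ((1 - t) * cos A + t * cos (A + 2 * th n)) * ((1 - t) * cos A + t * cos (A + 2 * th n)) +
    ((1 - t) * sin A + t * sin (A + 2 * th n)) * ((1 - t) * sin A + t * sin (A + 2 * th n)) =
    (1-t)*(1-t)*(sin A * sin A + cos A * cos A) + t*t*(sin (A + 2 * th n) * sin (A + 2 * th n) + cos (A + 2 * th n) * cos (A + 2 * th n))
    + 2*t*(1-t)*(cos A * cos (A + 2 * th n) + sin A * sin (A + 2 * th n))) by ring.
  rewrite E, S1, S2, <- CM. set (c := cos (th n)) in *.
  assert (F : 0 <= 1 - c * c) by nra.
  assert (G : 0 <= t * (1 - t) <= 1/4) by (destruct Ht as [Ht1 Ht2]; split; [apply Rmult_le_pos; lra | pose proof (Rle_0_sqr (t - 1/2)); unfold Rsqr in *; lra]).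
  replace ((1 - t) * (1 - t) * 1 + t * t * 1 + 2 * t * (1 - t) * (2 * c * c - 1))
    with (1 - 4 * (t * (1 - t)) * (1 - c * c)) by ring.
  split; nra.
Qed.

Lemma abs_le_inv x c : Rabs x <= c -> -c <= x <= c.
Proof. unfold Rabs; destruct Rcase_abs; lra. Qed.

Lemma conv_sq X Y c t : Rabs X <= c -> Rabs Y <= c -> 0 <= t <= 1 ->
  ((1 - t) * X + t * Y) * ((1 - t) * X + t * Y) <= c * c.
Proof.
  intros HX HY [T1 T2]. apply abs_le_inv in HX. apply abs_le_inv in HY.
  assert (L : -c <= (1-t)*X + t*Y) by nra.
  assert (U : (1-t)*X + t*Y <= c) by nra.
  nra.
Qed.

Lemma face n b : (1 <= n)%nat -> on_reg_polygon (4 * n) b ->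
  exists C S be, C*C + S*S = 1 /\ be * be <= sin (th n) * sin (th n) /\
    b = (cos (th n) * C - be * S, cos (th n) * S + be * C) /\
    forall a, on_reg_polygon (4 * n) a ->
      (fst a * C + snd a * S) * (fst a * C + snd a * S) <= cos (th n) * cos (th n).
Proof.
  intros Hn [k [t [Hk [Ht Hb]]]].
  set (phi := (2 * INR k + 1) * th n).
  exists (cos phi), (sin phi), ((2 * t - 1) * sin (th n)).
  split; [pose proof (sin2_cos2 phi); unfold Rsqr in *; lra|].
  split; [destruct Ht; assert (Q : (2*t-1)*(2*t-1) <= 1) by nra; pose proof (Rle_0_sqr (sin (th n))); unfold Rsqr in *; replace ((2 * t - 1) * sin (th n) * ((2 * t - 1) * sin (th n))) with (((2*t-1)*(2*t-1)) * (sin (th n) * sin (th n))) by ring; apply Rmult_le_compat_r with (r := sin (th n) * sin (th n)) in Q; lra|].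
  split.
  - subst b. rewrite !RV by exact Hn. rewrite S_INR.
    replace (2 * INR k * th n) with (phi - th n) by (unfold phi; ring).
    replace (2 * (INR k + 1) * th n) with (phi + th n) by (unfold phi; ring).
    rewrite cos_minus, sin_minus, cos_plus, sin_plus.
    unfold vadd, vscal; cbn [fst snd]. f_equal; ring.
  - intros a [j [u [Hj [Hu Ha]]]]. subst a. rewrite !RV by exact Hn.
    unfold vadd, vscal; cbn [fst snd].
    replace (((1 - u) * cos (2 * INR j * th n) + u * cos (2 * INR (S j) * th n)) * cos phi +
      ((1 - u) * sin (2 * INR j * th n) + u * sin (2 * INR (S j) * th n)) * sin phi) with
      ((1 - u) * cos (2 * INR j * th n - phi) + u * cos (2 * INR (S j) * th n - phi))
      by (rewrite !cos_minus; ring).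
    apply conv_sq; [| |exact Hu].
    + replace (2 * INR j * th n - phi) with
        ((2 * IZR (Z.of_nat j - Z.of_nat k) - 1) * th n).
      * apply trig_odd; exact Hn.
      * rewrite minus_IZR, <- !INR_IZR_INZ. unfold phi. ring.
    + replace (2 * INR (S j) * th n - phi) with
        ((2 * IZR (Z.of_nat (S j) - Z.of_nat k) - 1) * th n).
      * apply trig_odd; exact Hn.
      * rewrite minus_IZR, <- !INR_IZR_INZ. unfold phi. ring.
Qed.

Lemma chord1 n a b : (1 <= n)%nat -> on_reg_polygon (4 * n) a -> on_reg_polygon (4 * n) b ->
  cos (th n) * (e2 a - e2 b) <= 2 * sin (th n) * Rabs (dt a b).
Proof.
  intros Hn Ha Hb.
  destruct (th_facts n Hn) as [T0 [T1 _]]. pose proof PI_RGT_0.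
  assert (c0 : 0 < cos (th n)) by (apply cos_gt_0; lra).
  assert (s0 : 0 < sin (th n)) by (apply sin_gt_0; lra).
  pose proof (sin2_cos2 (th n)) as SC. unfold Rsqr in SC.
  destruct (face n b Hn Hb) as [C [S [be [HCS [Hbe [Eb Hf]]]]]].
  pose proof (Hf a Ha) as Ha1. pose proof (poly_e2 n a Hn Ha) as [_ Ha2].
  set (a1 := fst a * C + snd a * S) in *.
  set (a2 := - fst a * S + snd a * C).
  assert (E1 : e2 a = a1 * a1 + a2 * a2).
  { unfold e2, a1, a2. transitivity ((fst a * fst a + snd a * snd a) * (C*C+S*S)); [rewrite HCS; ring|ring]. }
  assert (E2 : e2 b = cos (th n) * cos (th n) + be * be).
  { rewrite Eb. unfold e2; simpl.
    transitivity ((cos (th n) * cos (th n) + be * be) * (C*C+S*S)); [ring|rewrite HCS; ring]. }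
  assert (E3 : dt a b = be * a1 - cos (th n) * a2).
  { rewrite Eb. unfold dt, a1, a2; simpl. ring. }
  rewrite E1, E2, E3. apply core; try lra.
Qed.

Lemma chord n a b : (1 <= n)%nat -> on_reg_polygon (4 * n) a -> on_reg_polygon (4 * n) b ->
  cos (th n) * Rabs (e2 a - e2 b) <= 2 * sin (th n) * Rabs (dt a b).
Proof.
  intros Hn Ha Hb. pose proof (chord1 n a b Hn Ha Hb). pose proof (chord1 n b a Hn Hb Ha).
  replace (dt b a) with (- dt a b) in H0 by (unfold dt; ring). rewrite Rabs_Ropp in H0.
  destruct (Rle_dec 0 (e2 a - e2 b)).
  - rewrite Rabs_right; lra.
  - rewrite Rabs_left by lra. lra.
Qed.

Ltac veq := repeat match goal with p : vec |- _ => destruct p end;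
  unfold vsub, vopp in *; unfold vadd, vscal, vzero, linmap in *; cbn [fst snd] in *.

Lemma lin_add a b c d p q : linmap a b c d (vadd p q) = vadd (linmap a b c d p) (linmap a b c d q).
Proof. veq. f_equal; ring. Qed.

Lemma lin_scal a b c d r p : linmap a b c d (vscal r p) = vscal r (linmap a b c d p).
Proof. veq. f_equal; ring. Qed.

Lemma lin_inj a b c d p q : a * d - b * c <> 0 -> linmap a b c d p = linmap a b c d q -> p = q.
Proof.
  intros HD E. veq. injection E as E1 E2.
  assert (X : (a * d - b * c) * (r1 - r) = 0).
  { replace ((a * d - b * c) * (r1 - r)) with (d * ((a*r1+b*r2) - (a*r+b*r0)) - b * ((c*r1+d*r2) - (c*r+d*r0))) by ring.
    rewrite E1, E2. ring. }
  assert (Y : (a * d - b * c) * (r2 - r0) = 0).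
  { replace ((a * d - b * c) * (r2 - r0)) with (a * ((c*r1+d*r2) - (c*r+d*r0)) - c * ((a*r1+b*r2) - (a*r+b*r0))) by ring.
    rewrite E1, E2. ring. }
  apply Rmult_integral in X; apply Rmult_integral in Y.
  destruct X as [X|X]; [contradiction|]; destruct Y as [Y|Y]; [contradiction|].
  f_equal; lra.
Qed.

Lemma lin_surj a b c d v : a * d - b * c <> 0 -> exists p, v = linmap a b c d p.
Proof.
  intros HD. destruct v as [v1 v2].
  exists ((d * v1 - b * v2) / (a * d - b * c), (- c * v1 + a * v2) / (a * d - b * c)).
  unfold linmap; cbn [fst snd]. f_equal; field; exact HD.
Qed.

Definition Hyp n N a b c d := (1 <= n)%nat /\ is_norm N /\ a * d - b * c <> 0 /\
  (forall v, N v = 1 <-> exists p, on_reg_polygon (4 * n) p /\ v = linmap a b c d p).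

Lemma M1 n N a b c d q : Hyp n N a b c d -> (N (linmap a b c d q) = 1 <-> on_reg_polygon (4 * n) q).
Proof.
  intros [Hn [HN [HD HU]]]. rewrite HU. split.
  - intros [p [Hp E]]. apply lin_inj in E; [subst; exact Hp|exact HD].
  - intros Hq. exists q. split; auto.
Qed.

Lemma Mscal n N a b c d r q : Hyp n N a b c d ->
  N (linmap a b c d (vscal r q)) = Rabs r * N (linmap a b c d q).
Proof. intros [_ [[_ [Hs _]] _]]. rewrite lin_scal. apply Hs. Qed.

Lemma M2 n N a b c d q : Hyp n N a b c d -> q <> vzero ->
  0 < N (linmap a b c d q) /\ on_reg_polygon (4 * n) (vscal (/ N (linmap a b c d q)) q).
Proof.
  intros H Hq. pose proof H as [Hn [HN [HD HU]]].
  assert (P : 0 < N (linmap a b c d q)).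
  { destruct (Rle_lt_or_eq_dec 0 _ (norm_nonneg N HN (linmap a b c d q))) as [h|h]; [exact h|].
    exfalso. apply Hq. destruct HN as [H0 _]. symmetry in h. apply H0 in h.
    apply (lin_inj a b c d); [exact HD|]. rewrite h. veq. f_equal; ring. }
  split; [exact P|]. apply (M1 n N a b c d); [exact H|].
  rewrite (Mscal n N a b c d) by exact H. rewrite Rabs_right.
  - field. lra.
  - left. apply Rinv_0_lt_compat, P.
Qed.

Lemma M3 n N a b c d q : Hyp n N a b c d ->
  e2 q <= N (linmap a b c d q) * N (linmap a b c d q).
Proof.
  intros H. destruct (classic (q = vzero)) as [E|E].
  - subst. unfold e2, vzero; simpl. pose proof (norm_nonneg N (proj1 (proj2 H)) (linmap a b c d (0,0))). nra.
  - destruct (M2 n N a b c d q H E) as [P Hp].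
    pose proof (poly_e2 n _ (proj1 H) Hp) as [_ U].
    set (m := N (linmap a b c d q)) in *.
    assert (Eq : q = vscal m (vscal (/ m) q)) by (veq; f_equal; field; lra).
    rewrite Eq at 1. unfold e2 in *. veq.
    replace (m * (/ m * r) * (m * (/ m * r)) + m * (/ m * r0) * (m * (/ m * r0)))
      with ((m * m) * (/ m * r * (/ m * r) + / m * r0 * (/ m * r0))) by ring.
    assert (0 <= m * m) by nra. nra.
Qed.

Lemma M0 n N a b c d : Hyp n N a b c d -> N (linmap a b c d vzero) = 0.
Proof.
  intros H. replace vzero with (vscal 0 vzero) by (unfold vscal, vzero; simpl; f_equal; ring).
  rewrite (Mscal n N a b c d) by exact H. rewrite Rabs_R0. ring.
Qed.

Lemma lagrange p q : e2 p * e2 q = ip p q * ip p q + dt p q * dt p q.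
Proof. unfold e2, ip, dt. ring. Qed.

Lemma aux1 k z x : k <> 0 -> e2 (vscal (/ k) (vadd z x)) - e2 (vscal (/ k) (vsub z x)) = 4 * ip z x / (k * k).
Proof. intros. unfold e2, ip. veq. field. auto. Qed.
Lemma aux2 k z x : k <> 0 -> dt (vscal (/ k) (vadd z x)) (vscal (/ k) (vsub z x)) = - 2 * dt z x / (k * k).
Proof. intros. unfold dt. veq. field. auto. Qed.
Lemma aux3 mu z x : mu <> 0 -> ip (vscal (/ mu) z) x = ip z x / mu.
Proof. intros. unfold ip. veq. field. auto. Qed.
Lemma aux4 mu z x : mu <> 0 -> dt (vscal (/ mu) z) x = dt z x / mu.
Proof. intros. unfold dt. veq. field. auto. Qed.
Lemma aux5 mu z x t : mu <> 0 -> dt (vadd (vscal (/ mu) z) (vscal t x)) x = dt z x / mu.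
Proof. intros. unfold dt. veq. field. auto. Qed.

Lemma lower n N a b c d x z t : Hyp n N a b c d -> on_reg_polygon (4 * n) x -> z <> vzero ->
  N (linmap a b c d (vadd z x)) = N (linmap a b c d (vsub z x)) ->
  cos (th n) ^ 2 <= N (linmap a b c d (vadd (vscal (/ N (linmap a b c d z)) z) (vscal t x))).
Proof.
  intros H Hx Hz Hbis. pose proof H as [Hn [HN [HD HU]]].
  destruct (th_facts n Hn) as [T0 [T1 _]]. pose proof PI_RGT_0.
  assert (c0 : 0 < cos (th n)) by (apply cos_gt_0; lra).
  assert (s0 : 0 < sin (th n)) by (apply sin_gt_0; lra).
  pose proof (sin2_cos2 (th n)) as SC. unfold Rsqr in SC.
  set (C := cos (th n)) in *. set (S := sin (th n)) in *.
  set (M := fun q => N (linmap a b c d q)).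
  change (C ^ 2 <= M (vadd (vscal (/ M z) z) (vscal t x))).
  change (M (vadd z x) = M (vsub z x)) in Hbis.
  pose proof (poly_e2 n x Hn Hx) as [Ex _]. fold C in Ex.
  assert (HA : vadd z x <> vzero /\ vsub z x <> vzero).
  { assert (K : forall u v, M u = M v -> u <> vzero \/ v <> vzero -> u <> vzero /\ v <> vzero).
    { intros u v E [Hu|Hv].
      - split; auto. intro Hv. destruct (M2 n N a b c d u H Hu) as [P _].
        change (0 < M u) in P. rewrite E, Hv in P. unfold M in P. rewrite (M0 n N a b c d H) in P. lra.
      - split; auto. intro Hu. destruct (M2 n N a b c d v H Hv) as [P _].
        change (0 < M v) in P. rewrite <- E, Hu in P. unfold M in P. rewrite (M0 n N a b c d H) in P. lra. }
    apply K; [exact Hbis|]. destruct (classic (vadd z x = vzero)) as [E|E]; [right|left; exact E].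
    intro E'. unfold e2 in Ex. veq. injection E as E1 E2. injection E' as E3 E4. nra. }
  destruct HA as [HA HB].
  destruct (M2 n N a b c d _ H HA) as [Pk Pa]. destruct (M2 n N a b c d _ H HB) as [_ Pb].
  destruct (M2 n N a b c d _ H Hz) as [Pz Pw].
  change (0 < M (vadd z x)) in Pk. change (on_reg_polygon (4 * n) (vscal (/ M (vadd z x)) (vadd z x))) in Pa.
  change (on_reg_polygon (4 * n) (vscal (/ M (vsub z x)) (vsub z x))) in Pb.
  change (0 < M z) in Pz. change (on_reg_polygon (4 * n) (vscal (/ M z) z)) in Pw. rewrite <- Hbis in Pb.
  set (k := M (vadd z x)) in *. set (mu := M z) in *.
  pose proof (chord n _ _ Hn Pa Pb) as Ch. fold C S in Ch.
  set (I := ip z x). set (D := dt z x).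
  assert (E1 : e2 (vscal (/ k) (vadd z x)) - e2 (vscal (/ k) (vsub z x)) = 4 * I / (k * k))
    by (apply aux1; lra).
  assert (E2 : dt (vscal (/ k) (vadd z x)) (vscal (/ k) (vsub z x)) = - 2 * D / (k * k))
    by (apply aux2; lra).
  rewrite E1, E2 in Ch.
  assert (Kk : 0 < k * k) by nra.
  replace (4 * I / (k*k)) with ((4/(k*k)) * I) in Ch by (field; lra).
  replace (-2 * D/(k*k)) with (-(2/(k*k)) * D) in Ch by (field; lra).
  assert (P4 : 0 < 4/(k*k)) by (apply Rdiv_lt_0_compat; lra).
  assert (P2 : 0 < 2/(k*k)) by (apply Rdiv_lt_0_compat; lra).
  rewrite Rabs_mult, Rabs_mult, Rabs_Ropp, (Rabs_right (4/(k*k))), (Rabs_right (2/(k*k))) in Ch by lra.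
  assert (Ch2 : C * Rabs I <= S * Rabs D).
  { apply Rmult_le_compat_r with (r := k * k / 4) in Ch; [|lra].
    replace (C * (4 / (k * k) * Rabs I) * (k * k / 4)) with (C * Rabs I) in Ch by (field; lra).
    replace (2 * S * (2 / (k * k) * Rabs D) * (k * k / 4)) with (S * Rabs D) in Ch by (field; lra).
    exact Ch. }
  assert (Ch3 : C * C * (I * I) <= S * S * (D * D)).
  { assert (QI : I*I = Rabs I * Rabs I) by (rewrite <- Rabs_mult; rewrite Rabs_right; nra).
    assert (QD : D*D = Rabs D * Rabs D) by (rewrite <- Rabs_mult; rewrite Rabs_right; nra).
    rewrite QI, QD. pose proof (Rabs_pos I). pose proof (Rabs_pos D).
    assert (Z : (C * Rabs I) * (C * Rabs I) <= (S * Rabs D) * (S * Rabs D))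
      by (apply Rmult_le_compat; try exact Ch2; apply Rmult_le_pos; lra).
    replace (C * C * (Rabs I * Rabs I)) with ((C * Rabs I) * (C * Rabs I)) by ring.
    replace (S * S * (Rabs D * Rabs D)) with ((S * Rabs D) * (S * Rabs D)) by ring. exact Z. }
  set (w := vscal (/ mu) z) in *. set (q := vadd w (vscal t x)).
  pose proof (poly_e2 n w Hn Pw) as [Ew _]. fold C in Ew.
  assert (Iw : ip w x = I / mu) by (apply aux3; lra).
  assert (Dw : dt w x = D / mu) by (apply aux4; lra).
  assert (Dq : dt q x = D / mu) by (apply aux5; lra).
  pose proof (lagrange w x) as Lw. pose proof (lagrange q x) as Lq.
  rewrite Iw, Dw in Lw. rewrite Dq in Lq.
  assert (Ch4 : C * C * (I / mu * (I / mu)) <= S * S * (D / mu * (D / mu))).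
  { replace (I / mu * (I / mu)) with ((I * I) / (mu * mu)) by (field; lra).
    replace (D / mu * (D / mu)) with ((D * D) / (mu * mu)) by (field; lra).
    assert (Pm : 0 <= / (mu * mu)) by (left; apply Rinv_0_lt_compat; nra).
    apply Rmult_le_compat_r with (r := / (mu * mu)) in Ch3; [|exact Pm].
    unfold Rdiv. replace (C * C * (I * I * / (mu * mu))) with (C * C * (I * I) * / (mu * mu)) by ring.
    replace (S * S * (D * D * / (mu * mu))) with (S * S * (D * D) * / (mu * mu)) by ring. exact Ch3. }
  set (i' := I / mu) in *. set (d' := D / mu) in *.
  assert (Hip : 0 <= ip q x * ip q x) by nra.
  assert (G1 : C * C * (e2 w * e2 x) <= e2 q * e2 x) by nra.
  assert (Ex' : 0 < e2 x) by nra.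
  assert (G2 : C * C * e2 w <= e2 q).
  { apply Rmult_le_reg_r with (r := e2 x); [exact Ex'|]. nra. }
  assert (G3 : C * C * (C * C) <= e2 q) by nra.
  pose proof (M3 n N a b c d q H) as G4. change (e2 q <= M q * M q) in G4.
  pose proof (norm_nonneg N HN (linmap a b c d q)) as G5. change (0 <= M q) in G5.
  simpl. rewrite Rmult_1_r.
  destruct (Rle_dec (C * C) (M q)) as [h|h]; [exact h|].
  exfalso. assert (M q * M q < C * C * (C * C)) by nra. lra.
Qed.

Definition Jv (p : vec) : vec := (- snd p, fst p).

Lemma rot_vertex n j A : (1 <= n)%nat ->
  (A = 2 * INR j * th n + PI / 2 \/ A = 2 * INR j * th n + PI / 2 - 2 * PI) ->
  (cos A, sin A) = Jv (cos (2 * INR j * th n), sin (2 * INR j * th n)).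
Proof.
  intros Hn HA. unfold Jv; cbn [fst snd].
  set (B := 2 * INR j * th n).
  assert (E : cos A = cos (B + PI / 2) /\ sin A = sin (B + PI / 2)).
  { destruct HA as [HA|HA]; rewrite HA; [split; reflexivity|].
    pose proof (cos_period (B + PI / 2 - 2 * PI) 1) as P1.
    pose proof (sin_period (B + PI / 2 - 2 * PI) 1) as P2.
    simpl INR in P1, P2. replace (B + PI / 2 - 2 * PI + 2 * 1 * PI) with (B + PI / 2) in P1, P2 by ring.
    split; symmetry; assumption. }
  destruct E as [E1 E2]. rewrite E1, E2, cos_plus, sin_plus, cos_PI2, sin_PI2. f_equal; ring.
Qed.

Lemma Jpoly n p : (1 <= n)%nat -> on_reg_polygon (4 * n) p -> on_reg_polygon (4 * n) (Jv p).
Proof.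
  intros Hn [k [t [Hk [Ht Hp]]]]. destruct (th_facts n Hn) as [_ [_ [_ T3]]].
  assert (Hh : 2 * INR n * th n = PI / 2) by lra.
  destruct (lt_dec (k + n) (4 * n)) as [L|L].
  - exists (k + n)%nat, t. split; [exact L|]. split; [exact Ht|].
    subst p. rewrite !RV by exact Hn.
    rewrite (rot_vertex n k (2 * INR (k + n) * th n)) by (auto; left; rewrite plus_INR; lra).
    rewrite (rot_vertex n (S k) (2 * INR (S (k + n)) * th n)) by (auto; left; rewrite S_INR, plus_INR, S_INR; lra).
    unfold Jv, vadd, vscal; cbn [fst snd]. f_equal; ring.
  - exists (k + n - 4 * n)%nat, t. split; [lia|]. split; [exact Ht|].
    subst p. rewrite !RV by exact Hn.
    assert (I1 : INR (k + n - 4 * n) = INR k + INR n - 4 * INR n).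
    { rewrite minus_INR by lia. rewrite plus_INR, mult_INR. simpl. ring. }
    assert (I2 : INR (S (k + n - 4 * n)) = INR (S k) + INR n - 4 * INR n).
    { replace (S (k + n - 4 * n)) with (S k + n - 4 * n)%nat by lia.
      rewrite minus_INR by lia. rewrite plus_INR, mult_INR. simpl. ring. }
    rewrite (rot_vertex n k (2 * INR (k + n - 4 * n) * th n)) by (auto; right; rewrite I1; lra).
    rewrite (rot_vertex n (S k) (2 * INR (S (k + n - 4 * n)) * th n)) by (auto; right; rewrite I2; lra).
    unfold Jv, vadd, vscal; cbn [fst snd]. f_equal; ring.
Qed.

Lemma MJ n N a b c d q : Hyp n N a b c d -> N (linmap a b c d (Jv q)) = N (linmap a b c d q).
Proof.
  intros H. destruct (classic (q = vzero)) as [E|E].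
  - subst. unfold Jv, vzero; cbn [fst snd]. rewrite Ropp_0. reflexivity.
  - destruct (M2 n N a b c d q H E) as [P Hp].
    set (m := N (linmap a b c d q)) in *.
    apply (Jpoly n) in Hp; [|exact (proj1 H)].
    apply (M1 n N a b c d) in Hp; [|exact H].
    assert (Eq : Jv q = vscal m (Jv (vscal (/ m) q))) by (unfold Jv; veq; f_equal; field; lra).
    rewrite Eq, (Mscal n N a b c d) by exact H. rewrite Hp, Rabs_right by lra. ring.
Qed.

Lemma auxJ1 a b c d x' : vsub (linmap a b c d (Jv x')) (vopp (linmap a b c d x')) = linmap a b c d (vadd (Jv x') x').
Proof. unfold Jv; veq; f_equal; ring. Qed.
Lemma auxJ2 a b c d x' : vsub (linmap a b c d (Jv x')) (linmap a b c d x') = linmap a b c d (Jv (vadd (Jv x') x')).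
Proof. unfold Jv; veq; f_equal; ring. Qed.

Lemma PI_nonempty n N a b c d x : Hyp n N a b c d -> N x = 1 -> exists w, P_I N x w.
Proof.
  intros H Hx. pose proof H as [Hn [HN [HD HU]]].
  destruct (lin_surj a b c d x HD) as [x' Ex]. subst x.
  apply (M1 n N a b c d) in Hx as Px; [|exact H].
  set (z := linmap a b c d (Jv x')).
  assert (Nz : N z = 1) by (apply (M1 n N a b c d); [exact H|apply Jpoly; auto]).
  exists (vscal (/ N z) z). exists z. split; [|split; [lra|split; [|reflexivity]]].
  - unfold bis.
    assert (E1 : vsub z (vopp (linmap a b c d x')) = linmap a b c d (vadd (Jv x') x'))
      by (apply auxJ1).
    assert (E2 : vsub z (linmap a b c d x') = linmap a b c d (Jv (vadd (Jv x') x')))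
      by (apply auxJ2).
    rewrite E1, E2, (MJ n N a b c d) by exact H. reflexivity.
  - intro Z. rewrite Z in Nz. replace vzero with (linmap a b c d vzero) in Nz by (veq; f_equal; ring).
    rewrite (M0 n N a b c d H) in Nz. lra.
Qed.

Lemma sine_le N w x t : is_norm N -> sine N w x <= N (vadd w (vscal t x)).
Proof.
  intros HN. unfold sine. apply Rinf_le.
  - exists 0. intros r [s Hs]. subst. apply norm_nonneg, HN.
  - exists t. reflexivity.
Qed.

Lemma scal_inv r v : r <> 0 -> v = vscal (/ r) (vscal r v).
Proof. intros. veq. f_equal; field; auto. Qed.

Lemma upper n N a b c d tau : Hyp n N a b c d -> 0 < tau <= 1/4 -> tau <= cos (th n) / 2 ->
  exists x w, N x = 1 /\ P_I N x w /\
    sine N w x <= cos (th n) ^ 2 / (1 - 2 * tau * (sin (th n) * sin (th n))).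
Proof.
  intros H Ht Ht2. pose proof H as [Hn [HN [HD HU]]].
  destruct (th_facts n Hn) as [T0 [T1 _ ]]. pose proof PI_RGT_0.
  destruct (th_facts n Hn) as [_ [_ [_ T3]]].
  assert (c0 : 0 < cos (th n)) by (apply cos_gt_0; lra).
  assert (s0 : 0 < sin (th n)) by (apply sin_gt_0; lra).
  pose proof (sin2_cos2 (th n)) as SC. unfold Rsqr in SC.
  set (C := cos (th n)) in *. set (Sn := sin (th n)) in *.
  assert (Hnn : (n < 4 * n)%nat) by lia.
  assert (H0n : (0 < 4 * n)%nat) by lia.
  set (V0 := reg_vertex (4 * n) 0). set (V1 := reg_vertex (4 * n) 1).
  set (Vn := reg_vertex (4 * n) n). set (Vn1 := reg_vertex (4 * n) (S n)).
  assert (EV0 : V0 = (1, 0)).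
  { unfold V0. rewrite RV by exact Hn. simpl INR. rewrite !Rmult_0_r, Rmult_0_l, cos_0, sin_0. reflexivity. }
  assert (EV1 : V1 = (1 - 2 * Sn * Sn, 2 * Sn * C)).
  { unfold V1. rewrite RV by exact Hn. simpl INR. rewrite Rmult_1_r, cos_2a_sin, sin_2a. reflexivity. }
  assert (EVn : Vn = (0, 1)).
  { unfold Vn. rewrite RV by exact Hn. replace (2 * INR n * th n) with (PI / 2) by lra.
    rewrite cos_PI2, sin_PI2. reflexivity. }
  assert (EVn1 : Vn1 = (- (2 * Sn * C), 1 - 2 * Sn * Sn)).
  { unfold Vn1. rewrite RV by exact Hn. rewrite S_INR.
    replace (2 * (INR n + 1) * th n) with (PI / 2 + 2 * th n) by lra.
    rewrite cos_plus, sin_plus, cos_PI2, sin_PI2, cos_2a_sin, sin_2a. fold C Sn. f_equal; ring. }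
  set (x' := vadd (vscal (1 - tau) V0) (vscal tau V1)).
  set (z' := vscal tau (vsub V1 V0)).
  set (mid := vadd (vscal (1 - /2) Vn) (vscal (/2) Vn1)).
  set (kap := 2 * Sn / C).
  set (De := 1 - 2 * tau * (Sn * Sn)).
  assert (HDe : 1/2 <= De) by (unfold De; nra).
  assert (Px : on_reg_polygon (4 * n) x') by (exists 0%nat, tau; repeat split; auto; lra).
  assert (Pmid : on_reg_polygon (4 * n) mid) by (exists n, (/2); repeat split; auto; lra).
  assert (PV0 : on_reg_polygon (4 * n) V0).
  { exists 0%nat, 0. repeat split; auto; try lra. fold V0 V1. rewrite EV0, EV1. veq. f_equal; ring. }
  assert (PVn : on_reg_polygon (4 * n) Vn).
  { exists n, 0. repeat split; auto; try lra. fold Vn Vn1. rewrite EVn, EVn1. veq. f_equal; ring. }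
  assert (Ea : vadd z' x' = vadd (vscal (1 - 2 * tau) V0) (vscal (2 * tau) V1)).
  { unfold z', x'. rewrite EV0, EV1. veq. f_equal; ring. }
  assert (Pa : on_reg_polygon (4 * n) (vadd z' x')).
  { rewrite Ea. exists 0%nat, (2 * tau). repeat split; auto; lra. }
  assert (Eb : vsub z' x' = vscal (-1) V0).
  { unfold z', x'. rewrite EV0, EV1. veq. f_equal; ring. }
  assert (Ec : z' = vscal (tau * kap) mid).
  { unfold z', mid, kap. rewrite EV0, EV1, EVn, EVn1. veq. f_equal; [field; lra|].
    transitivity (tau * (2*Sn/C) * (C*C)); [field; lra | f_equal; lra]. }
  set (tt := Sn * C / De). set (y := C * C / De).
  assert (Ed : vadd mid (vscal tt x') = vscal y Vn).
  { unfold mid, tt, y, x', De. rewrite EV0, EV1, EVn, EVn1. veq.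
    assert (1 - 2 * tau * (Sn * Sn) <> 0) by (unfold De in HDe; lra).
    f_equal; [field; auto|].
    replace ((1 - / 2) * 1 + / 2 * (1 - 2 * Sn * Sn)) with (C*C) by lra. field; auto. }
  set (L := linmap a b c d).
  assert (Mabs : forall r q, N (L (vscal r q)) = Rabs r * N (L q)) by (intros; apply (Mscal n N a b c d); exact H).
  assert (Mpol : forall q, on_reg_polygon (4 * n) q -> N (L q) = 1) by (intros; apply (M1 n N a b c d); auto).
  assert (Hkap : 0 < tau * kap <= 1).
  { unfold kap. split.
    - apply Rmult_lt_0_compat; [lra|]. apply Rdiv_lt_0_compat; lra.
    - replace (tau * (2 * Sn / C)) with ((2 * tau / C) * Sn) by (field; lra).
      assert (2 * tau / C <= 1) by (apply (Rmult_le_reg_r C); [lra|]; unfold Rdiv; rewrite Rmult_assoc, Rinv_l by lra; lra).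
      assert (Sn <= 1) by nra.
      assert (0 <= 2 * tau / C) by (apply Rlt_le, Rdiv_lt_0_compat; lra). nra. }
  assert (Nz : N (L z') = tau * kap).
  { rewrite Ec, Mabs, Mpol by exact Pmid. rewrite Rabs_right by lra. ring. }
  exists (L x'), (L mid). split; [apply Mpol, Px|]. split.
  - exists (L z'). split; [|split; [lra|split]].
    + unfold bis. replace (vsub (L z') (vopp (L x'))) with (L (vadd z' x')) by (unfold L; veq; f_equal; ring).
      replace (vsub (L z') (L x')) with (L (vsub z' x')) by (unfold L; veq; f_equal; ring).
      rewrite Mpol by exact Pa. rewrite Eb, Mabs, Mpol by exact PV0.
      unfold Rabs; destruct Rcase_abs; lra.
    + intro Z. rewrite Z in Nz. unfold L in Nz. replace vzero with (linmap a b c d vzero) in Nz by (veq; f_equal; ring).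
      rewrite (M0 n N a b c d H) in Nz. lra.
    + rewrite Nz, Ec. unfold L. rewrite lin_scal. apply scal_inv. lra.
  - eapply Rle_trans; [apply (sine_le N _ _ tt HN)|].
    replace (vadd (L mid) (vscal tt (L x'))) with (L (vadd mid (vscal tt x'))) by (unfold L; veq; f_equal; ring).
    rewrite Ed, Mabs, Mpol by exact PVn. fold C. unfold y.
    rewrite Rabs_right.
    + unfold De. simpl. lra.
    + left. apply Rdiv_lt_0_compat; nra.
Qed.

Lemma inner_lb n N a b c d x r : Hyp n N a b c d -> N x = 1 ->
  (exists w, P_I N x w /\ r = sine N w x) -> cos (th n) ^ 2 <= r.
Proof.
  intros H Hx [w [[z [Hb [Hz1 [Hz0 Hw]]]] Hr]]. pose proof H as [Hn [HN [HD HU]]].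
  subst r w. unfold sine. apply Rinf_ge.
  - exists (N (vadd (vscal (/ N z) z) (vscal 0 x))). exists 0. reflexivity.
  - intros r [t Ht]. subst r.
    destruct (lin_surj a b c d x HD) as [x' Ex]. destruct (lin_surj a b c d z HD) as [z' Ez]. subst x z.
    apply (M1 n N a b c d) in Hx as Px; [|exact H].
    replace (vadd (vscal (/ N (linmap a b c d z')) (linmap a b c d z')) (vscal t (linmap a b c d x')))
      with (linmap a b c d (vadd (vscal (/ N (linmap a b c d z')) z') (vscal t x')))
      by (rewrite lin_add, !lin_scal; reflexivity).
    apply (lower n N a b c d); auto.
    + intro Z. apply Hz0. rewrite Z. veq. f_equal; ring.
    + unfold bis in Hb.
      replace (vsub (linmap a b c d z') (vopp (linmap a b c d x'))) with (linmap a b c d (vadd z' x')) in Hb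
        by (veq; f_equal; ring).
      replace (vsub (linmap a b c d z') (linmap a b c d x')) with (linmap a b c d (vsub z' x')) in Hb
        by (veq; f_equal; ring).
      exact Hb.
Qed.

Theorem proposition4p3 (n : nat) (N : vec -> R) :
  (1 <= n)%nat ->
  is_norm N ->
  unit_circle_affine_regular N (4 * n) ->
  c_B N = (cos (PI / (4 * INR n))) ^ 2.
Proof.
  intros Hn HN [a [b [c [d [HD HU]]]]].
  assert (H : Hyp n N a b c d) by (split; [exact Hn | split; [exact HN | split; [exact HD | exact HU]]]).
  assert (Eth : th n = PI / (4 * INR n)) by (unfold th; rewrite mult_INR; f_equal; f_equal; simpl; ring). rewrite <- Eth.
  destruct (th_facts n Hn) as [T0 [T1 _]]. pose proof PI_RGT_0.
  assert (c0 : 0 < cos (th n)) by (apply cos_gt_0; lra).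
  assert (s0 : 0 < sin (th n)) by (apply sin_gt_0; lra).
  pose proof (sin2_cos2 (th n)) as SC. unfold Rsqr in SC.
  set (C := cos (th n)) in *. set (Sn := sin (th n)) in *.
  set (Inner := fun x => fun r => exists w, P_I N x w /\ r = sine N w x).
  assert (IL : forall x, N x = 1 -> C ^ 2 <= Rinf (Inner x)).
  { intros x Hx. apply Rinf_ge.
    - destruct (PI_nonempty n N a b c d x H Hx) as [w Hw]. exists (sine N w x), w. auto.
    - intros r Hr. exact (inner_lb n N a b c d x r H Hx Hr). }
  assert (NE : exists x, N x = 1).
  { exists (linmap a b c d (vadd (vscal (1 - 0) (reg_vertex (4 * n) 0)) (vscal 0 (reg_vertex (4 * n) 1)))).
    apply (M1 n N a b c d); auto. exists 0%nat, 0. repeat split; auto; try lra. lia. }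
  unfold c_B. fold Inner.
  set (E := fun c0 => exists x, N x = 1 /\ c0 = Rinf (Inner x)).
  change (Rinf E = C ^ 2).
  assert (LB : forall e, E e -> C ^ 2 <= e) by (intros e [x [Hx He]]; subst; apply IL; auto).
  assert (G1 : C ^ 2 <= Rinf E).
  { apply Rinf_ge; auto. destruct NE as [x Hx]. exists (Rinf (Inner x)), x. auto. }
  apply Rle_antisym; [|exact G1].
  destruct (Rle_dec (Rinf E) (C ^ 2)) as [h|h]; [exact h|exfalso].
  set (eps := Rinf E - C ^ 2).
  assert (Heps : 0 < eps) by (unfold eps; lra).
  set (tau := Rmin (Rmin (1/4) (eps / 8)) (C / 2)).
  assert (Ht1 : 0 < tau) by (unfold tau; repeat apply Rmin_glb_lt; lra).
  assert (Ht2 : tau <= 1/4) by (unfold tau; eapply Rle_trans; [apply Rmin_l|apply Rmin_l]).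
  assert (Ht3 : tau <= eps / 8) by (unfold tau; eapply Rle_trans; [apply Rmin_l|apply Rmin_r]).
  assert (Ht4 : tau <= C / 2) by (unfold tau; apply Rmin_r).
  destruct (upper n N a b c d tau H (conj Ht1 Ht2) Ht4) as [x [w [Hx [Hw Hs]]]].
  fold C Sn in Hs.
  assert (Ein : Rinf (Inner x) <= sine N w x).
  { apply Rinf_le; [|exists w; auto]. exists (C ^ 2). intros r Hr. exact (inner_lb n N a b c d x r H Hx Hr). }
  assert (EE : Rinf E <= Rinf (Inner x)).
  { apply Rinf_le; [exists (C ^ 2); intros e He; apply LB, He|]. exists x. auto. }
  set (De := 1 - 2 * tau * (Sn * Sn)) in *.
  assert (HDe : 1/2 <= De) by (unfold De; nra).
  assert (Key : C ^ 2 / De < C ^ 2 + eps).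
  { apply (Rmult_lt_reg_r De); [lra|]. unfold Rdiv. rewrite Rmult_assoc, Rinv_l by lra.
    assert (1 - De <= 2 * tau) by (unfold De; nra).
    assert (C ^ 2 <= 1) by (simpl; nra). nra. }
  unfold eps in Key. lra.
Qed.
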